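(* Under Assumptions (A) and (C), there exists $c_0>0$ such that for every $t\in[0,T]$, $$\langle f,2\Lambda f+(\boldsymbol B_t+(\bar{\boldsymbol B}_t)^* )f\rangle_{L^2,N}\ge c_0\langle f,f\rangle_{L^2,N}\qquad\text{for all }f\in L^2([0,T],\mathbb R^N).$$
   Context: $\langle f,g\rangle_{L^2,N}=\int_0^Tf^\top g\,dt$; kernels $G\in L^2([0,T]^2,\mathbb R^{N\times N})$ induce $(\boldsymbol Gf)(t)=\int_0^TG(t,s)f(s)ds$, $\boldsymbol G^*$ induced by $G(s,t)^\top$; Volterra kernel: $G(t,s)=0$ for $s\ge t$; $\mathcal G$: real Volterra kernels in $L^2([0,T]^2)$. Assumption (A) (relevant part): $\lambda^i>0$ for $i=1,\dots,N$; $B^{ij},\bar B^{ij}\in\mathcal G$ for all $i,j$, with $\bar B^{ii}=B^{ii}$; $B=(B^{ij})_{i,j}$, $\bar B=(\bar B^{ij})_{i,j}$, $\Lambda=\mathrm{diag}(\lambda^1,\dots,\lambda^N)$. Assumption (C): $\exists c_0>0$ with $\langle f,(\boldsymbol B+\bar{\boldsymbol B}^* )f+2\Lambda f-c_0f\rangle_{L^2,N}\ge0$ for all $f$. Truncation: $G_t(s,r)=\mathbb 1_{\{r>t\}}G(s,r)$ with induced operator $\boldsymbol G_t$; $(\bar{\boldsymbol B}_t)^*$ is the adjoint of $\bar{\boldsymbol B}_t$. *)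

(* Defs.v *)
From HB Require Import structures.
From mathcomp Require Import all_boot all_order all_algebra.
From mathcomp Require Import all_classical all_reals all_analysis.
Set Implicit Arguments. Unset Strict Implicit. Unset Printing Implicit Defensive.
Import Order.TTheory GRing.Theory Num.Theory.
Local Open Scope classical_set_scope.
Local Open Scope ring_scope.

Section Defs.
Variable R : realType.
Notation mu := (@lebesgue_measure R).

Definition L2fun (T : R) (g : R -> R) : Prop :=
  measurable_fun `[0, T] g /\
  mu.-integrable `[0, T] (fun x => ((g x) ^+ 2)%:E).

Definition L2vec (N : nat) (T : R) (f : 'I_N -> R -> R) : Prop :=
  forall i, L2fun T (f i).

Definition L2kernel (T : R) (G : R -> R -> R) : Prop :=
  measurable_fun (`[0, T] `*` `[0, T]) (fun p : R * R => G p.1 p.2) /\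
  (mu \x mu)%E.-integrable (`[0, T] `*` `[0, T])
     (fun p : R * R => ((G p.1 p.2) ^+ 2)%:E).

Definition volterra (T : R) (G : R -> R -> R) : Prop :=
  forall t s, 0 <= t <= T -> 0 <= s <= T -> t <= s -> G t s = 0.

Definition ipL2 (N : nat) (T : R) (f g : 'I_N -> R -> R) : R :=
  Rintegral mu `[0, T] (fun t => \sum_(i < N) f i t * g i t).

Definition kop (N : nat) (T : R) (G : 'I_N -> 'I_N -> R -> R -> R)
  (f : 'I_N -> R -> R) : 'I_N -> R -> R :=
  fun i t => Rintegral mu `[0, T] (fun s => \sum_(j < N) G i j t s * f j s).

Definition kadj (N : nat) (T : R) (G : 'I_N -> 'I_N -> R -> R -> R)
  (f : 'I_N -> R -> R) : 'I_N -> R -> R :=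
  fun i t => Rintegral mu `[0, T] (fun s => \sum_(j < N) G j i s t * f j s).

Definition ktrunc (N : nat) (t : R) (G : 'I_N -> 'I_N -> R -> R -> R)
  : 'I_N -> 'I_N -> R -> R -> R :=
  fun i j s r => if t < r then G i j s r else 0.
End Defs.

(* Main.v *)
Require Import Defs.
From HB Require Import structures.
From mathcomp Require Import all_boot all_order all_algebra.
From mathcomp Require Import all_classical all_reals all_analysis.
From mathcomp Require Import measurable_realfun unstable.
From mathcomp Require Import ring lra.
Import Order.TTheory GRing.Theory Num.Theory.
Import numFieldNormedType.Exports.
Set Implicit Arguments. Unset Strict Implicit. Unset Printing Implicit Defensive.
Local Open Scope classical_set_scope.
Local Open Scope ring_scope.

Section S.
Context {R : realType}.
Notation mu := (@lebesgue_measure R).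
Local Open Scope ereal_scope.

Lemma meas_partial (Phi : R * R -> R) : measurable_fun setT Phi ->
  measurable_fun setT (fun s : R => (\int[mu]_r (Phi (s, r))%:E : \bar R)).
Proof.
move=> mP.
have -> : (fun s => \int[mu]_r (Phi (s, r))%:E) =
   ((fun s => \int[mu]_r ((EFin \o Phi)^\+ (s, r)))
    \- (fun s => \int[mu]_r ((EFin \o Phi)^\- (s, r)))).
  by apply/funext => s; rewrite [LHS]integralE !unlock.
have mE : measurable_fun setT (EFin \o Phi) by exact/measurable_EFinP.
apply: emeasurable_funB.
  exact: (measurable_fun_fubini_tonelli_F (m2:=mu) _ (measurable_funepos mE) (funepos_ge0 _)).
exact: (measurable_fun_fubini_tonelli_F (m2:=mu) _ (measurable_funeneg mE) (funeneg_ge0 _)).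
Qed.

Lemma fine_int_le (psi : R -> R) : measurable_fun setT psi ->
  `|fine (\int[mu]_r (psi r)%:E)|%:E <= \int[mu]_r `|(psi r)%:E|.
Proof.
move=> mp.
have := le_abse_integral mu measurableT ((measurable_EFinP _ _).2 mp).
case: (\int[mu]_r (psi r)%:E) => [x| |] //= H; try by rewrite normr0 integral_ge0.
Qed.

Lemma absEM (a b : R) : `|(a * b)%R|%:E = `|a|%:E * `|b|%:E.
Proof. by rewrite normrM EFinM. Qed.

Lemma KL0 (Phi : R * R -> R) (u : R -> R) :
  measurable_fun setT Phi -> measurable_fun setT u ->
  (mu \x mu).-integrable setT (fun p => (u p.1 * Phi p)%:E) ->
  mu.-integrable setT (fun s => (u s * fine (\int[mu]_r (Phi (s, r))%:E))%:E).
Proof.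
move=> mP mu_ iP.
have mw : measurable_fun setT (fun s => fine (\int[mu]_r (Phi (s, r))%:E)).
  by apply: measurableT_comp => //; exact: meas_partial.
apply/integrableP; split.
  by apply/measurable_EFinP; exact: measurable_funM.
have mprod : measurable_fun setT (fun p : R * R => (u p.1 * Phi p)%R).
  apply: measurable_funM => //; exact: measurableT_comp.
have mabs : measurable_fun setT (fun p : R * R => `|(u p.1 * Phi p)%:E|).
  by apply: measurableT_comp => //; exact/measurable_EFinP.
have H : \int[mu \x mu]_z `|(u z.1 * Phi z)%:E| < +oo := (integrableP _ _ _ iP).2.
rewrite (fubini_tonelli1 (m1:=mu) (m2:=mu) (fun p => `|(u p.1 * Phi p)%:E|)) // in H.
apply: le_lt_trans H.
apply: ge0_le_integral => //.
- apply: measurableT_comp => //; apply/measurable_EFinP; exact: measurable_funM.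
- exact: (measurable_fun_fubini_tonelli_F (m2:=mu) _ mabs).
move=> s _; rewrite /fubini_F /=.
rewrite absEM.
have mPs : measurable_fun setT (fun r => Phi (s, r)) by exact: measurable_fun_pair2.
have -> : \int[mu]_y `|(u s * Phi (s, y))%R|%:E = \int[mu]_y (`|u s|%:E * `|Phi (s, y)|%:E).
  by apply: eq_integral => y _; exact: absEM.
have mA : measurable_fun setT (fun y => `|(Phi (s, y))%:E|).
  by apply: measurableT_comp => //; apply/measurable_EFinP.
have Z := @ge0_integralZl _ _ _ mu setT measurableT (fun y => `|(Phi (s, y))%:E|) mA `|(u s)%:E| (fun _ _ => abse_ge0 _) (abse_ge0 _).
apply: (@le_trans _ _ (`|(u s)%:E| * \int[mu]_y `|(Phi (s, y))%:E|)); last first.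
  by rewrite Z.
apply: lee_wpmul2l => //.
exact: (fine_int_le mPs).
Qed.

Local Close Scope ereal_scope.

Lemma L2T (T : R) (u : R -> R) : L2fun T u ->
  measurable_fun setT (u \_ `[0, T]) /\
  mu.-integrable setT (fun x => (((u \_ `[0, T]) x) ^+ 2)%:E).
Proof.
case=> mu_ iu; split; first exact/(measurable_restrictT _ _).1.
have := (integrable_mkcond _ _).1 iu; move/(_ (measurable_itv _)).
apply: eq_integrable => // x _; rewrite !patchE; case: ifP => //.
by rewrite expr0n.
Qed.

Definition ext2 (T : R) (G : R -> R -> R) : R * R -> R :=
  (fun p => G p.1 p.2) \_ (`[0, T] `*` `[0, T]).

Definition Kgood (T : R) (G : R -> R -> R) :=
  measurable_fun setT (ext2 T G) /\
  (mu \x mu)%E.-integrable setT (fun p => ((ext2 T G p) ^+ 2)%:E).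

Lemma mDD (T : R) : measurable (`[0, T] `*` `[0, T] : set (R * R)).
Proof. by apply: measurableX; exact: measurable_itv. Qed.

Lemma Kgood_of (T : R) G : L2kernel T G -> Kgood T G.
Proof.
case=> mG iG; split; first by move: mG; apply: (measurable_restrictT _ (mDD T)).1.
have := (integrable_mkcond _ _).1 iG; move/(_ (mDD T)).
apply: eq_integrable => // x _; rewrite /ext2 !patchE; case: ifP => //.
by rewrite expr0n.
Qed.

Lemma ext2_swap (T : R) G p : ext2 T (fun s r => G r s) p = ext2 T G (swap p).
Proof.
by rewrite /ext2 !patchE !in_setX /= andbC.
Qed.

Lemma Kgood_swap (T : R) G : L2kernel T G -> Kgood T (fun s r => G r s).
Proof.
move=> /Kgood_of [mG iG].
have mS : measurable_fun setT (ext2 T (fun s r => G r s)).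
  rewrite (_ : ext2 T _ = ext2 T G \o swap); last by apply/funext => p; exact: ext2_swap.
  by apply: measurableT_comp; [exact: mG|exact: measurable_swap].
split => //.
have mg : measurable_fun setT (fun p => `|((ext2 T G p) ^+ 2)%:E|)%E.
  apply: measurableT_comp => //; apply/measurable_EFinP; exact: measurable_funX.
have mgs : measurable_fun setT (fun p => `|((ext2 T G (swap p)) ^+ 2)%:E|)%E.
  apply: measurableT_comp => //; apply/measurable_EFinP; apply: measurable_funX.
  by apply: measurableT_comp; [exact: mG|exact: measurable_swap].
apply/integrableP; split.
  by apply/measurable_EFinP; exact: measurable_funX.
have H : (\int[(mu \x mu)%E]_z `|((ext2 T G z) ^+ 2)%:E| < +oo)%E := (integrableP _ _ _ iG).2.
rewrite (fubini_tonelli2 (m1:=mu) (m2:=mu) _ mg) // in H.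
have -> : (\int[(mu \x mu)%E]_z `|((ext2 T (fun s r => G r s) z) ^+ 2)%:E| =
         \int[(mu \x mu)%E]_z `|((ext2 T G (swap z)) ^+ 2)%:E|)%E.
  by apply: eq_integral => z _; rewrite ext2_swap.
by rewrite (fubini_tonelli1 (m1:=mu) (m2:=mu) _ mgs).
Qed.

Lemma amgm (a b c : R) : `|a * (b * c)| <= b ^+ 2 + a ^+ 2 * c ^+ 2.
Proof.
rewrite !normrM -[b ^+ 2]real_normK ?num_real // -[a ^+ 2]real_normK ?num_real //
  -[c ^+ 2]real_normK ?num_real //.
have ha := normr_ge0 a; have hb := normr_ge0 b; have hc := normr_ge0 c.
set x := `|a|; set y := `|b|; set z := `|c|.
have hxz : 0 <= x * z by exact: mulr_ge0.
nra.
Qed.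

Lemma prod_int (a b : R -> R) : measurable_fun setT a -> measurable_fun setT b ->
  mu.-integrable setT (fun x => (a x ^+ 2)%:E) ->
  mu.-integrable setT (fun x => (b x ^+ 2)%:E) ->
  (mu \x mu)%E.-integrable setT (fun p => (a p.1 ^+ 2 * b p.2 ^+ 2)%:E).
Proof.
move=> ma mb ia ib.
have mab : measurable_fun setT (fun p : R * R => a p.1 ^+ 2 * b p.2 ^+ 2).
  apply: measurable_funM; apply: measurable_funX; exact: measurableT_comp.
apply/integrableP; split; first exact/measurable_EFinP.
have mabs : measurable_fun setT (fun p : R * R => `|(a p.1 ^+ 2 * b p.2 ^+ 2)%:E|)%E.
  by apply: measurableT_comp => //; exact/measurable_EFinP.
rewrite (fubini_tonelli1 (m1:=mu) (m2:=mu) _ mabs) //.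
rewrite /fubini_F /=.
have mb2 : measurable_fun setT (fun y => (b y ^+ 2)%:E)%E.
  apply/measurable_EFinP; exact: measurable_funX.
have ma2 : measurable_fun setT (fun y => (a y ^+ 2)%:E)%E.
  apply/measurable_EFinP; exact: measurable_funX.
have -> : (\int[mu]_x \int[mu]_y `|a x ^+ 2 * b y ^+ 2|%:E =
   \int[mu]_x ((a x ^+ 2)%:E * \int[mu]_y (b y ^+ 2)%:E))%E.
  apply: eq_integral => x _.
  rewrite -ge0_integralZl //; try by [move=> y _; rewrite lee_fin sqr_ge0 | rewrite lee_fin sqr_ge0].
  apply: eq_integral => y _.
  rewrite ger0_norm; last by apply: mulr_ge0; exact: sqr_ge0.
  exact: EFinM.
have Z : (\int[mu]_x ((a x ^+ 2)%:E * \int[mu]_y (b y ^+ 2)%:E) =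
   \int[mu]_x (a x ^+ 2)%:E * \int[mu]_y (b y ^+ 2)%:E)%E.
  apply: ge0_integralZr => //.
  - by move=> x _; rewrite lee_fin sqr_ge0.
  - by apply: integral_ge0 => y _; rewrite lee_fin sqr_ge0.
rewrite Z.
have Ha : (\int[mu]_x (a x ^+ 2)%:E < +oo)%E.
  have <- : (\int[mu]_x `|(a x ^+ 2)%:E| = \int[mu]_x (a x ^+ 2)%:E)%E.
    by apply: eq_integral => x _; rewrite gee0_abs // lee_fin sqr_ge0.
  exact: (integrableP _ _ _ ia).2.
have Hb : (\int[mu]_x (b x ^+ 2)%:E < +oo)%E.
  have <- : (\int[mu]_x `|(b x ^+ 2)%:E| = \int[mu]_x (b x ^+ 2)%:E)%E.
    by apply: eq_integral => x _; rewrite gee0_abs // lee_fin sqr_ge0.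
  exact: (integrableP _ _ _ ib).2.
apply: lte_mul_pinfty => //.
- by apply: integral_ge0 => y _; rewrite lee_fin sqr_ge0.
- rewrite ge0_fin_numE //; by apply: integral_ge0 => y _; rewrite lee_fin sqr_ge0.
Qed.

Lemma KL (T : R) (N : nat) (G : 'I_N -> R -> R -> R) (h : 'I_N -> R -> R)
  (u : R -> R) :
  (forall j, Kgood T (G j)) -> (forall j, L2fun T (h j)) -> L2fun T u ->
  mu.-integrable `[0, T] (fun s =>
    (u s * Rintegral mu `[0, T] (fun r => \sum_(j < N) G j s r * h j r))%:E).
Proof.
move=> KG Lh Lu.
pose ut := u \_ `[0, T]; pose ht j := h j \_ `[0, T].
have [mut iut] := L2T Lu.
have mht j : measurable_fun setT (ht j) := (L2T (Lh j)).1.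
have iht j : mu.-integrable setT (fun x => (ht j x ^+ 2)%:E) := (L2T (Lh j)).2.
pose Phi (p : R * R) := \sum_(j < N) ext2 T (G j) p * ht j p.2.
have mPhi : measurable_fun setT Phi.
  apply: measurable_sum => j; apply: measurable_funM; first exact: (KG j).1.
  by apply: measurableT_comp; [exact: mht|exact: measurable_snd].
have Hint : (mu \x mu)%E.-integrable setT (fun p => (ut p.1 * Phi p)%:E).
  pose M p := \sum_(j < N) (ext2 T (G j) p ^+ 2 + ut p.1 ^+ 2 * ht j p.2 ^+ 2).
  apply: (@le_integrable _ _ _ (mu \x mu)%E setT measurableT _ (fun p => (M p)%:E)).
  - apply/measurable_EFinP; apply: measurable_funM => //.
    by apply: measurableT_comp; [exact: mut|exact: measurable_fst].
  - move=> p _ /=; rewrite lee_fin.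
    rewrite [`|M p|]ger0_norm; last first.
      by apply: sumr_ge0 => j _; apply: addr_ge0; [exact: sqr_ge0|apply: mulr_ge0; exact: sqr_ge0].
    rewrite /Phi mulr_sumr; apply: le_trans (ler_norm_sum _ _ _) _.
    by apply: ler_sum => j _; exact: amgm.
  - apply: (@eq_integrable _ _ _ (mu \x mu)%E setT measurableT
      (fun p => \sum_(j < N) ((ext2 T (G j) p ^+ 2)%:E + (ut p.1 ^+ 2 * ht j p.2 ^+ 2)%:E)%E)).
    + move=> p _; rewrite /M -sumEFin; apply: eq_bigr => j _; by rewrite EFinD.
    apply: (integrable_sum measurableT) => j _; apply: (integrableD measurableT).
    + exact: (KG j).2.
    + exact: prod_int.
have key := KL0 mPhi mut Hint.
have key2 : mu.-integrable `[0, T]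
    (fun s => (ut s * fine (\int[mu]_r (Phi (s, r))%:E))%:E).
  by apply: (integrableS _ _ _ key) => //; exact: measurable_itv.
apply: (eq_integrable _ _ _ _ key2); first exact: measurable_itv.
move=> s sD.
rewrite /ut patchE sD; congr EFin; congr (_ * _).
rewrite /Rintegral; congr fine.
rewrite integral_mkcond; apply: eq_integral => r _.
rewrite patchE; case: ifP => rD.
  rewrite /Phi; congr EFin; apply: eq_bigr => j _.
  by rewrite /ext2 /ht !patchE in_setX /= sD rD.
rewrite /Phi big1 // => j _.
by rewrite /ht patchE rD mulr0.
Qed.

Lemma posmin (N : nat) (lam : 'I_N -> R) : (forall i, 0 < lam i) ->
  exists m : R, 0 < m /\ forall i, m <= lam i.
Proof.
move=> l0.
have S0 : 0 <= \sum_(i < N) (lam i)^-1.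
  by apply: sumr_ge0 => i _; rewrite invr_ge0 ltW.
exists (1 + \sum_(i < N) (lam i)^-1)^-1; split.
  by rewrite invr_gt0 ltr_wpDr.
move=> i; rewrite -[lam i]invrK lef_pV2 ?posrE ?invr_gt0 ?ltr_wpDr //.
rewrite (bigD1 i) //= addrCA lerDl addr_ge0 //.
by apply: sumr_ge0 => j _; rewrite invr_ge0 ltW.
Qed.

Lemma int_sqsum (T : R) (N : nat) (k : 'I_N -> R) (phi : 'I_N -> R -> R) :
  (forall i, L2fun T (phi i)) ->
  mu.-integrable `[0, T] (EFin \o (fun s => \sum_(i < N) k i * (phi i s ^+ 2))).
Proof.
move=> L.
have H : mu.-integrable `[0, T] (fun s => \sum_(i < N) ((k i)%:E * (phi i s ^+ 2)%:E)%E).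
  apply: (integrable_sum _) => [|i _]; first exact: measurable_itv.
  apply: integrableZl; first exact: measurable_itv.
  exact: (L i).2.
apply: (eq_integrable _ _ _ _ H); first exact: measurable_itv.
by move=> s _ /=; rewrite -sumEFin; apply: eq_bigr => i _; rewrite EFinM.
Qed.

Lemma L2trunc (T t : R) (f : R -> R) : L2fun T f ->
  L2fun T (fun r => if t < r then f r else 0).
Proof.
case=> mf if2.
have mg : measurable_fun `[0, T] (fun r => if t < r then f r else 0).
  apply: measurable_fun_if.
  - exact: measurable_itv.
  - by apply: measurable_fun_ltr; [exact: measurable_cst|exact: measurable_id].
  - apply: (measurable_funS _ _ mf); [exact: measurable_itv|exact: subIsetl].
  - exact: measurable_cst.
split => //.
apply: (le_integrable _ _ _ if2); first exact: measurable_itv.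
  by apply/measurable_EFinP; apply: measurable_funX.
move=> r _ /=; rewrite lee_fin; case: ifP => _ //.
by rewrite expr0n /= normr0.
Qed.
End S.

Unset Implicit Arguments.

Theorem mainTheorem13 (R : realType) (N : nat) (T : R)
  (lam : 'I_N -> R) (B Bb : 'I_N -> 'I_N -> R -> R -> R) :
  (* Assumption (A) *)
  (forall i, 0 < lam i) ->
  (forall i j, volterra T (B i j) /\ L2kernel T (B i j)) ->
  (forall i j, volterra T (Bb i j) /\ L2kernel T (Bb i j)) ->
  (forall i, Bb i i = B i i) ->
  (* Assumption (C) *)
  (exists c0 : R, 0 < c0 /\
     forall f : 'I_N -> R -> R, L2vec T f ->
       0 <= ipL2 T f (fun i s => kop T B f i s + kadj T Bb f i s
                                 + 2 * lam i * f i s - c0 * f i s)) ->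
  exists c0 : R, 0 < c0 /\
    forall t : R, 0 <= t <= T ->
    forall f : 'I_N -> R -> R, L2vec T f ->
      c0 * ipL2 T f f <=
      ipL2 T f (fun i s => 2 * lam i * f i s + kop T (ktrunc t B) f i s
                           + kadj T (ktrunc t Bb) f i s).
Proof.
move=> lam0 hB hBb _ [c0 [c0pos hC]].
have [m [m0 mle]] := posmin lam0.
exists (Num.min c0 (2 * m)); split; first by rewrite lt_min c0pos mulr_gt0.
move=> t _ f Lf.
set c := Num.min c0 (2 * m).
have cc0 : c <= c0 by rewrite /c ge_min lexx.
have c2m : c <= 2 * m by rewrite /c ge_min lexx orbT.
pose g j r := if t < r then f j r else 0.
have Lg : L2vec T g by move=> j; exact: L2trunc.
have inD s : s \in `[0, T]%classic -> 0 <= s <= T.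
  by rewrite mem_setE in_itv.
have E1 i s : kop T (ktrunc t B) f i s = kop T B g i s.
  rewrite /kop; apply: eq_Rintegral => r _; apply: eq_bigr => j _.
  by rewrite /ktrunc /g; case: ifP => _; rewrite ?mul0r ?mulr0.
have E2 i s : 0 <= s <= T -> s <= t -> kop T B g i s = 0.
  move=> sD st; rewrite /kop /Rintegral integral0_eq // => r /= rD.
  rewrite big1 // => j _; rewrite /g; case: ifP => tr; last by rewrite mulr0.
  rewrite ((hB i j).1 s r) ?mul0r //.
  by apply: (le_trans st); exact: ltW.
have E3 i s : 0 <= s <= T ->
    kadj T (ktrunc t Bb) f i s = if t < s then kadj T Bb g i s else 0.
  move=> sD; case: ifP => ts.
    rewrite /kadj; apply: eq_Rintegral => r rD; apply: eq_bigr => j _.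
    rewrite /ktrunc ts /g; case: ifP => tr //.
    rewrite mulr0 ((hBb j i).1 r s) ?mul0r //; first exact: inD.
    by apply: ltW; apply: (le_lt_trans _ ts); rewrite leNgt tr.
  rewrite /kadj /Rintegral integral0_eq // => r _.
  by rewrite big1 // => j _; rewrite /ktrunc ts mul0r.
pose Pf s := \sum_(i < N) (2 * lam i) * (f i s ^+ 2).
pose Pg s := \sum_(i < N) (2 * lam i - c0) * (g i s ^+ 2).
pose Ff s := \sum_(i < N) 1 * (f i s ^+ 2).
pose A s := \sum_(i < N) (g i s * kop T B g i s + g i s * kadj T Bb g i s).
have iPf : (@lebesgue_measure R).-integrable `[0, T] (EFin \o Pf) by exact: int_sqsum.
have iPg : (@lebesgue_measure R).-integrable `[0, T] (EFin \o Pg) by exact: int_sqsum.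
have iFf : (@lebesgue_measure R).-integrable `[0, T] (EFin \o Ff) by exact: int_sqsum.
have iA : (@lebesgue_measure R).-integrable `[0, T] (EFin \o A).
  have H : (@lebesgue_measure R).-integrable `[0, T] (fun s => \sum_(i < N)
      ((g i s * kop T B g i s)%:E + (g i s * kadj T Bb g i s)%:E)%E).
    apply: (integrable_sum _) => [|i _]; first exact: measurable_itv.
    apply: (integrableD _); first exact: measurable_itv.
      exact: (KL (G := B i) (fun j => Kgood_of (hB i j).2) Lg (Lg i)).
    exact: (KL (G := fun j s r => Bb j i r s) (fun j => Kgood_swap (hBb j i).2) Lg (Lg i)).
  apply: (eq_integrable _ _ _ _ H); first exact: measurable_itv.
  by move=> s _ /=; rewrite -sumEFin; apply: eq_bigr => i _; rewrite EFinD.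
have mD : measurable (`[0, T]%classic : set R) by exact: measurable_itv.
have G1 : ipL2 T f (fun i s => 2 * lam i * f i s + kop T (ktrunc t B) f i s
                           + kadj T (ktrunc t Bb) f i s) =
          Rintegral (@lebesgue_measure R) `[0, T] (fun s => Pf s + A s).
  rewrite /ipL2; apply: eq_Rintegral => s /inD sD.
  rewrite /Pf /A -big_split; apply: eq_bigr => i _ /=.
  rewrite E1 E3 //; case: (ltP t s) => ts.
    by rewrite /g ts; ring.
  have tsF : (t < s) = false by rewrite ltNge ts.
  by rewrite /g tsF E2 //; ring.
have G2 : ipL2 T g (fun i s => kop T B g i s + kadj T Bb g i s
                                 + 2 * lam i * g i s - c0 * g i s) =
          Rintegral (@lebesgue_measure R) `[0, T] (fun s => A s + Pg s).
  rewrite /ipL2; apply: eq_Rintegral => s _.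
  rewrite /Pg /A -big_split; apply: eq_bigr => i _ /=.
  ring.
have hCg := hC g Lg.
rewrite G2 RintegralD // in hCg.
rewrite G1 RintegralD //.
have G3 : ipL2 T f f = Rintegral (@lebesgue_measure R) `[0, T] Ff.
  rewrite /ipL2; apply: eq_Rintegral => s _; apply: eq_bigr => i _.
  by rewrite mul1r expr2.
rewrite G3 -RintegralZl //.
have G4 : Rintegral (@lebesgue_measure R) `[0, T] (fun s => c * Ff s) <=
          Rintegral (@lebesgue_measure R) `[0, T] (fun s => Pf s - Pg s).
  apply: le_Rintegral => //.
    by apply: (integrableZl _ _ iFf).
    by apply: (integrableB _ iPf iPg).
  move=> s _; rewrite /Ff /Pf /Pg mulr_sumr -sumrB; apply: ler_sum => i _.
  have li := mle i; have fi := sqr_ge0 (f i s).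
  rewrite /g; case: ifP => _; nra.
rewrite RintegralB // in G4.
apply: (le_trans G4).
by rewrite lerD2l -subr_ge0 opprK.
Qed.
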